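(* Let $f,g\in \mathbb{Z}[\alpha_1^{\pm 1},\ldots,\alpha_r^{\pm 1}]$. Then: (1) There exists a set $K\subset \mathbb{Z}^r$ contained in a finite union of hyperplanes of $\mathbb{R}^r$ such that if $\mathcal N(f)\subset \mathcal N(g)$ then $\mathcal N(f(\xi^s))\subset \mathcal N(g(\xi^s))$ for all $s\in \mathbb{Z}^r\setminus K$. (2) If $K\subset \mathbb{Z}^r$ is contained in a finite union of hyperplanes and $\mathcal N(f(\xi^s))\subset \mathcal N(g(\xi^s))$ for all $s\in \mathbb{Z}^r\setminus K$, then $\mathcal N(f)\subset \mathcal N(g)$. (3) If $K\subset \mathbb{Z}^r$ is contained in a finite union of hyperplanes and $\mathcal N(f)\subsetneq \mathcal N(g)$, then there is an $s\in \mathbb{Z}^r\setminus K$ with $\mathcal N(f(\xi^s))\subsetneq \mathcal N(g(\xi^s))$.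
   Context: For $f\in \mathbb{Z}[\alpha_1^{\pm 1},\ldots,\alpha_r^{\pm 1}]$ the Newton polytope $\mathcal N(f)\subset\mathbb{R}^r$ is the convex hull of the set of exponent vectors $(u_1,\ldots,u_r)\in\mathbb{Z}^r$ such that the coefficient of $\alpha_1^{u_1}\cdots\alpha_r^{u_r}$ in $f$ is nonzero (for a Laurent polynomial in one variable $\xi$ it is a segment in $\mathbb{R}$). For $s=(s_1,\ldots,s_r)\in\mathbb{Z}^r$, the toric substitution $f\mapsto f(\xi^s)$ is the ring homomorphism $\mathbb{Z}[\alpha_1^{\pm1},\ldots,\alpha_r^{\pm1}]\to\mathbb{Z}[\xi^{\pm1}]$, $\alpha_i\mapsto \xi^{s_i}$. *)

(* Defs.v *)
From HB Require Import structures.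
From mathcomp Require Import all_boot all_order all_algebra.
From mathcomp Require Import finmap.
From mathcomp Require Import Rstruct.
From Stdlib Require Reals.
Set Implicit Arguments. Unset Strict Implicit. Unset Printing Implicit Defensive.
Import Order.TTheory GRing.Theory Num.Theory.
Local Open Scope ring_scope.
Local Open Scope fset_scope.

Notation R := Rdefinitions.R.

Notation expo r := 'rV[int]_r.

(* A Laurent polynomial in Z[a_1^{+-1},...,a_r^{+-1}]: a finitely supported
   function from exponent vectors to integer coefficients. *)
Definition laurent (r : nat) := {fsfun expo r -> int with 0%R}.

Definition zdot (r : nat) (u s : expo r) : int := \sum_(i < r) u 0 i * s 0 i.

(* Toric substitution a_i |-> xi^{s_i}: a univariate Laurent polynomial,
   exponents in Z^1.  Coefficient of xi^k is the sum of coefficients f u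
   over u with <u,s> = k. *)
Definition tsubst (r : nat) (s : expo r) (f : laurent r) : laurent 1 :=
  [fsfun k in [fset (\row_(i < 1) zdot u s) | u in finsupp f]
     => \sum_(u <- finsupp f | zdot u s == k 0 0) f u].

Definition toR (n : nat) (u : expo n) : 'rV[R]_n := map_mx (fun z : int => z%:~R) u.

Definition newton (n : nat) (f : laurent n) (x : 'rV[R]_n) : Prop :=
  exists lam : expo n -> R,
    [/\ forall u, u \in finsupp f -> 0 <= lam u,
        \sum_(u <- finsupp f) lam u = 1
      & x = \sum_(u <- finsupp f) lam u *: toR u].

Definition newton_sub (n : nat) (f g : laurent n) : Prop :=
  forall x, newton f x -> newton g x.

Definition newton_ssub (n : nat) (f g : laurent n) : Prop :=
  newton_sub f g /\ exists x, newton g x /\ ~ newton f x.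

Definition hyperplane (r : nat) (a : 'rV[R]_r) (b : R) (x : 'rV[R]_r) : Prop :=
  a != 0 /\ \sum_(i < r) a 0 i * x 0 i = b.

Definition in_fin_hyperplanes (r : nat) (K : expo r -> Prop) : Prop :=
  exists H : seq ('rV[R]_r * R),
    (forall ab, ab \in H -> ab.1 != 0) /\
    forall k, K k -> exists2 ab, ab \in H & hyperplane ab.1 ab.2 (toR k).

(* Main.v *)
Require Import Defs.
From HB Require Import structures.
From mathcomp Require Import all_boot all_order all_algebra.
From mathcomp Require Import finmap.
From mathcomp Require Import Rstruct.
From mathcomp Require Import ring lra.
From mathcomp Require Import classical_sets boolp topology normedtype derive Rstruct_topology.
Set Implicit Arguments. Unset Strict Implicit. Unset Printing Implicit Defensive.
Import Order.TTheory GRing.Theory Num.Theory.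
Import numFieldNormedType.Exports.
Local Open Scope ring_scope.

From Stdlib Require Import ClassicalEpsilon.
Definition dot (n : nat) (a b : 'rV[R]_n) : R := \sum_i a 0 i * b 0 i.

Lemma dotC n (a b : 'rV[R]_n) : dot a b = dot b a.
Proof. by apply: eq_bigr => i _; rewrite mulrC. Qed.

Lemma dotDl n (a b c : 'rV[R]_n) : dot (a + b) c = dot a c + dot b c.
Proof. by rewrite /dot -big_split; apply: eq_bigr => i _; rewrite mxE mulrDl. Qed.

Lemma dotZl n k (a c : 'rV[R]_n) : dot (k *: a) c = k * dot a c.
Proof. by rewrite /dot mulr_sumr; apply: eq_bigr => i _; rewrite mxE mulrA. Qed.

Lemma dotNl n (a c : 'rV[R]_n) : dot (- a) c = - dot a c.
Proof. by rewrite -scaleN1r dotZl mulN1r. Qed.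

Lemma dotBl n (a b c : 'rV[R]_n) : dot (a - b) c = dot a c - dot b c.
Proof. by rewrite dotDl dotNl. Qed.

Lemma dot0l n (c : 'rV[R]_n) : dot 0 c = 0.
Proof. by rewrite /dot big1 // => i _; rewrite mxE mul0r. Qed.

Lemma dot_suml n (I : Type) (s : seq I) (F : I -> 'rV[R]_n) c :
  dot (\sum_(j <- s) F j) c = \sum_(j <- s) dot (F j) c.
Proof.
elim: s => [|j s IH]; first by rewrite !big_nil dot0l.
by rewrite !big_cons dotDl IH.
Qed.

Lemma dotDr n (a b c : 'rV[R]_n) : dot c (a + b) = dot c a + dot c b.
Proof. by rewrite !(dotC c) dotDl. Qed.
Lemma dotZr n k (a c : 'rV[R]_n) : dot c (k *: a) = k * dot c a.
Proof. by rewrite !(dotC c) dotZl. Qed.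
Lemma dotNr n (a c : 'rV[R]_n) : dot c (- a) = - dot c a.
Proof. by rewrite !(dotC c) dotNl. Qed.
Lemma dotBr n (a b c : 'rV[R]_n) : dot c (a - b) = dot c a - dot c b.
Proof. by rewrite !(dotC c) dotBl. Qed.

Lemma dot_ge0 n (a : 'rV[R]_n) : 0 <= dot a a.
Proof. by apply: sumr_ge0 => i _; rewrite -expr2 sqr_ge0. Qed.

Lemma dot_gt0 n (a : 'rV[R]_n) : a != 0 -> 0 < dot a a.
Proof.
move=> a0; rewrite lt_def dot_ge0 andbT; apply: contraNN a0 => /eqP H.
have := H; rewrite /dot => /psumr_eq0P H2.
apply/eqP/rowP => i; rewrite mxE; apply/eqP.
by rewrite -sqrf_eq0 expr2 H2 // => j _; rewrite -expr2 sqr_ge0.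
Qed.

Lemma toRD n (u w : expo n) : toR (u + w) = toR u + toR w.
Proof. by apply/rowP => i; rewrite !mxE intrD. Qed.
Lemma toRN n (u : expo n) : toR (- u) = - toR u.
Proof. by apply/rowP => i; rewrite !mxE intrN. Qed.
Lemma toRB n (u w : expo n) : toR (u - w) = toR u - toR w.
Proof. by rewrite toRD toRN. Qed.
Lemma toR_inj n : injective (@toR n).
Proof.
move=> u w H; apply/rowP => i; have := congr1 (fun M : 'rV[R]_n => M 0 i) H.
by rewrite !mxE => /eqP; rewrite eqr_int => /eqP.
Qed.

Lemma dot_toR n (u s : expo n) : dot (toR u) (toR s) = (zdot u s)%:~R.
Proof.
rewrite /zdot /dot rmorph_sum; apply: eq_bigr => i _.
by rewrite !mxE -intrM.
Qed.

Lemma sum_pred1 (T : eqType) (V : lmodType R) (r : seq T) (u : T) (F : T -> V) :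
  uniq r -> u \in r -> \sum_(w <- r) (w == u)%:R *: F w = F u.
Proof.
move=> ur ui; rewrite (bigD1_seq u) //= eqxx scale1r big1 ?addr0 //.
by move=> w /negPf ->; rewrite scale0r.
Qed.

Lemma sum_pred1R (T : eqType) (r : seq T) (u : T) :
  uniq r -> u \in r -> \sum_(w <- r) ((w == u)%:R : R) = 1.
Proof.
move=> ur ui; rewrite (bigD1_seq u) //= eqxx big1 ?addr0 //.
by move=> w /negPf ->.
Qed.

Lemma sum_pos_seq (T : eqType) (r : seq T) (F : T -> R) :
  (forall u, u \in r -> 0 <= F u) -> \sum_(u <- r) F u = 0 ->
  forall u, u \in r -> F u = 0.
Proof.
move=> H /eqP; rewrite big_seq psumr_eq0 // => /allP A u hu.
by have := A u hu; rewrite hu => /eqP.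
Qed.

Lemma newton_seg n (h : laurent n) u1 u2 (t : R) :
  u1 \in finsupp h -> u2 \in finsupp h -> 0 <= t <= 1 ->
  newton h (t *: toR u1 + (1 - t) *: toR u2).
Proof.
move=> h1 h2 /andP[t0 t1].
exists (fun w => t * (w == u1)%:R + (1 - t) * (w == u2)%:R); split.
- move=> w _; apply: addr_ge0; apply: mulr_ge0 => //; rewrite ?subr_ge0 //;
  by case: (_ == _).
- rewrite big_split /= -!mulr_sumr !sum_pred1R ?fset_uniq //.
  by rewrite !mulr1 addrC subrK.
- have E u : u \in finsupp h -> \sum_(w <- finsupp h) (w == u)%:R *: toR w = toR u.
    by move=> hu; apply: sum_pred1 (fset_uniq _) hu.
  rewrite -(E _ h1) -(E _ h2) !scaler_sumr -big_split /=.
  by apply: eq_bigr => w _; rewrite [RHS]scalerDl !scalerA.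
Qed.

Lemma newton_pt n (h : laurent n) u : u \in finsupp h -> newton h (toR u).
Proof.
move=> hu; have := newton_seg hu hu (t:=1); rewrite subrr scale0r addr0 scale1r.
by apply; rewrite lexx ler01.
Qed.

Lemma newton_bound n (h : laurent n) x p :
  newton h x -> exists2 u, u \in finsupp h & dot x p <= dot (toR u) p.
Proof.
move=> [lam [l0 l1 ->]].
case: (boolP (has (fun u => dot (\sum_(u <- finsupp h) lam u *: toR u) p <= dot (toR u) p)
         (finsupp h))) => [/hasP[u hu Hu]|/hasPn H]; first by exists u.
exfalso.
set y := \sum_(u <- finsupp h) lam u *: toR u in H.
have E : \sum_(u <- finsupp h) lam u * (dot y p - dot (toR u) p) = 0.
  rewrite (eq_bigr (fun u => lam u * dot y p - lam u * dot (toR u) p)); last first.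
    by move=> u _; rewrite mulrBr.
  rewrite sumrB -mulr_suml l1 mul1r /y dot_suml.
  by apply/eqP; rewrite subr_eq0; apply/eqP; apply: eq_bigr => u _; rewrite dotZl.
have H0 : forall u, u \in finsupp h -> 0 <= lam u * (dot y p - dot (toR u) p).
  move=> u hu; apply: mulr_ge0; first exact: l0.
  by rewrite subr_ge0 ltW //; have := H u hu; rewrite -ltNge.
have H2 := sum_pos_seq H0 E.
have: \sum_(u <- finsupp h) lam u = 0.
  rewrite big_seq big1 // => u hu.
  have := H2 _ hu; move=> /eqP; rewrite mulf_eq0 => /orP[/eqP //|].
  by rewrite subr_eq0 => /eqP E2; have := H u hu; rewrite E2 lexx.
by rewrite l1 => /eqP; rewrite oner_eq0.
Qed.

Lemma newton_conv n (f g : laurent n) :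
  (forall u, u \in finsupp f -> newton g (toR u)) -> newton_sub f g.
Proof.
move=> H x [mu [m0 m1 ->]].
have H' : forall u, exists lam : expo n -> R, u \in finsupp f ->
   [/\ forall w, w \in finsupp g -> 0 <= lam w,
        \sum_(w <- finsupp g) lam w = 1
      & toR u = \sum_(w <- finsupp g) lam w *: toR w].
  move=> u; case: (boolP (u \in finsupp f)) => hu.
    by have [lam Hl] := H u hu; exists lam.
  by exists (fun=> 0).
pose L u := proj1_sig (constructive_indefinite_description _ (H' u)).
have LP u : u \in finsupp f -> _ := proj2_sig (constructive_indefinite_description _ (H' u)).
exists (fun w => \sum_(u <- finsupp f) mu u * L u w); split.
- move=> w hw; rewrite big_seq; apply: sumr_ge0 => u hu.
  by apply: mulr_ge0; [exact: m0 | have [A _ _] := LP u hu; exact: A].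
- rewrite exchange_big /= -m1 big_seq [RHS]big_seq; apply: eq_bigr => u hu.
  by rewrite -mulr_sumr; have [_ -> _] := LP u hu; rewrite mulr1.
- rewrite [RHS](eq_bigr (fun w => \sum_(u <- finsupp f) (mu u * L u w) *: toR w)); last first.
    by move=> w _ /=; rewrite scaler_suml.
  rewrite [RHS]exchange_big /= big_seq [RHS]big_seq; apply: eq_bigr => u hu.
  have [_ _ ->] := LP u hu; rewrite scaler_sumr; apply: eq_bigr => w _.
  by rewrite scalerA.
Qed.

Lemma row1E (k : expo 1) : k = \row_(i < 1) k 0 0.
Proof. by apply/rowP => i; rewrite ord1 mxE. Qed.

Lemma tsE r (s : expo r) (f : laurent r) k :
  tsubst s f k = \sum_(u <- finsupp f | zdot u s == k 0 0) f u.
Proof.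
rewrite /tsubst fsfun_fun; case: ifP => // hk.
rewrite big1_seq // => u /andP[/eqP e hu]; exfalso; move/negP: hk; apply.
by rewrite [k]row1E -e; apply/imfsetP; exists u.
Qed.

Lemma ts_supp r (s : expo r) (f : laurent r) k :
  k \in finsupp (tsubst s f) -> exists2 u, u \in finsupp f & zdot u s = k 0 0.
Proof.
rewrite mem_finsupp tsE => H.
case: (boolP (has (fun u => zdot u s == k 0 0) (finsupp f))) => [/hasP[u hu /eqP e]|/hasPn N].
  by exists u.
by move/negP: H; case; rewrite big1_seq // => u /andP[e hu]; move: (N u hu); rewrite e.
Qed.

Lemma ts_supp_in r (s : expo r) (f : laurent r) u :
  u \in finsupp f ->
  (forall w, w \in finsupp f -> w != u -> zdot w s != zdot u s) ->
  (\row_(i < 1) zdot u s) \in finsupp (tsubst s f).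
Proof.
move=> hu H; rewrite mem_finsupp tsE mxE big_mkcond (bigD1_seq u) ?fset_uniq //=.
rewrite eqxx big1_seq ?addr0 -?mem_finsupp // => w /andP[nw hw].
by case: ifP => // /eqP e; move: (H w hw nw); rewrite e eqxx.
Qed.

Lemma toR1 (k : expo 1) : (toR k) 0 0 = (k 0 0)%:~R.
Proof. by rewrite mxE. Qed.

Lemma dot1c (y : 'rV[R]_1) c : dot y (const_mx c) = y 0 0 * c.
Proof. by rewrite /dot big_ord1 mxE. Qed.

Lemma newton1_seg (h : laurent 1) k1 k2 (y : 'rV[R]_1) :
  k1 \in finsupp h -> k2 \in finsupp h ->
  (k1 0 0)%:~R <= y 0 0 <= (k2 0 0)%:~R -> newton h y.
Proof.
move=> h1 h2 /andP[a1 a2].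
set a : R := (k1 0 0)%:~R in a1 *; set b : R := (k2 0 0)%:~R in a2 *.
have [eab|nab] := eqVneq a b.
  have -> : y = 1 *: toR k1 + (1 - 1) *: toR k2.
    apply/rowP => i; rewrite ord1 !mxE -/a subrr mul0r addr0 mul1r.
    by apply/eqP; rewrite eq_le a1 eab a2.
  by apply: newton_seg => //; rewrite ler01 lexx.
have ab : a < b by rewrite lt_def eq_sym nab (le_trans a1 a2).
have ba0 : b - a != 0 by rewrite subr_eq0 eq_sym.
have -> : y = ((b - y 0 0) / (b - a)) *: toR k1 + (1 - (b - y 0 0) / (b - a)) *: toR k2.
  apply/rowP => i; rewrite ord1 !mxE -/a -/b.
  by field.
apply: newton_seg => //; apply/andP; split.
  by apply: divr_ge0; rewrite subr_ge0 // ltW.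
by rewrite ler_pdivrMr ?subr_gt0 // mul1r; lra.
Qed.

Lemma newton1_ub (h : laurent 1) (y : 'rV[R]_1) :
  newton h y -> exists2 k, k \in finsupp h & y 0 0 <= (k 0 0)%:~R.
Proof.
move=> /(newton_bound (const_mx 1)) [k hk]; rewrite !dot1c !mulr1 toR1 => H.
by exists k.
Qed.

Lemma newton1_lb (h : laurent 1) (y : 'rV[R]_1) :
  newton h y -> exists2 k, k \in finsupp h & (k 0 0)%:~R <= y 0 0.
Proof.
move=> /(newton_bound (const_mx (-1))) [k hk]; rewrite !dot1c toR1 !mulrN1 lerN2 => H.
by exists k.
Qed.

Lemma part1 r (f g : laurent r) s :
  (forall u w, u \in finsupp g -> w \in finsupp g -> u != w -> zdot u s != zdot w s) ->
  newton_sub f g -> newton_sub (tsubst s f) (tsubst s g).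
Proof.
move=> inj fg; apply: newton_conv => k hk.
have [u hu ek] := ts_supp hk.
have nu := fg _ (newton_pt hu).
have [w2 hw2] := newton_bound (toR s) nu.
have [w1 hw1] := newton_bound (- toR s) nu.
rewrite !dotNr !dot_toR lerN2 !ler_int => H1 H2.
apply: (@newton1_seg _ (\row_(i < 1) zdot w1 s) (\row_(i < 1) zdot w2 s)).
- by apply: ts_supp_in => // w hw nw; apply: inj.
- by apply: ts_supp_in => // w hw nw; apply: inj.
- by rewrite toR1 !mxE -ek !ler_int H1 H2.
Qed.

Lemma small_eps n (D : seq 'rV[R]_n) p v :
  (forall d, d \in D -> 0 < dot d p) ->
  exists2 e : R, 0 < e & forall d, d \in D -> 0 < dot d (p + e *: v).
Proof.
move=> HD.
suff [e e0 He] : exists2 e : R, 0 < e & forall d, d \in D -> e * `|dot d v| < dot d p.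
  exists e => // d hd; rewrite dotDr dotZr.
  have := He d hd; have := ler_norm (- dot d v); rewrite normrN.
  move=> h1 h2; have : e * - dot d v <= e * `|dot d v| by rewrite ler_wpM2l // ltW.
  by rewrite mulrN; lra.
elim: D HD => [|d D IH] HD; first by exists 1.
have [e1 e10 He1] : exists2 e : R, 0 < e & forall d, d \in D -> e * `|dot d v| < dot d p.
  by apply: IH => d' hd'; apply: HD; rewrite inE hd' orbT.
have dp : 0 < dot d p by apply: HD; rewrite inE eqxx.
set c := dot d p / (`|dot d v| + 1).
have n1 : 0 < `|dot d v| + 1 by apply: ltr_wpDl.
have c0 : 0 < c by apply: divr_gt0.
exists (Num.min e1 c); first by rewrite lt_min e10 c0.
move=> d'; rewrite inE => /orP[/eqP ->|hd'].
  have : Num.min e1 c <= c by rewrite ge_min lexx orbT.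
  move=> h; have : Num.min e1 c * (`|dot d v| + 1) <= dot d p.
    by rewrite -ler_pdivlMr.
  have : 0 < Num.min e1 c by rewrite lt_min e10 c0.
  by move=> h0; rewrite mulrDr mulr1; lra.
have : Num.min e1 c <= e1 by rewrite ge_min lexx.
move=> h; apply: le_lt_trans (He1 d' hd'); apply: ler_wpM2r => //.
Qed.

Lemma perturb n (A D : seq 'rV[R]_n) p :
  (forall a, a \in A -> a != 0) -> (forall d, d \in D -> 0 < dot d p) ->
  exists q, (forall d, d \in D -> 0 < dot d q) /\ (forall a, a \in A -> dot a q != 0).
Proof.
elim: A D p => [|a A IH] D p HA HD; first by exists p.
have a0 : a != 0 by apply: HA; rewrite inE eqxx.
have [p1 [Hp1 ap1]] : exists p1, (forall d, d \in D -> 0 < dot d p1) /\ dot a p1 != 0.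
  case: (eqVneq (dot a p) 0) => [ap|ap]; last by exists p.
  have [e e0 He] := small_eps a HD; exists (p + e *: a); split => //.
  rewrite dotDr dotZr ap add0r mulf_neq0 ?gt_eqF //.
  exact: dot_gt0.
pose sg : R := if 0 < dot a p1 then 1 else -1.
have [q [Hq1 Hq2]] : exists q, (forall d, d \in (sg *: a) :: D -> 0 < dot d q) /\
    (forall a, a \in A -> dot a q != 0).
  apply: IH => [a' ha'|d]; first by apply: HA; rewrite inE ha' orbT.
  rewrite inE => /orP[/eqP ->|]; last exact: Hp1.
  rewrite dotZl /sg; case: ifP => [h|/negbT]; first by rewrite mul1r.
  by rewrite -leNgt le_eqVlt (negPf ap1) /= mulN1r oppr_gt0.
exists q; split => [d hd|a']; first by apply: Hq1; rewrite inE hd orbT.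
rewrite inE => /orP[/eqP ->|]; last exact: Hq2.
have := Hq1 (sg *: a); rewrite inE eqxx dotZl => /(_ isT).
by apply: contraTN => /eqP ->; rewrite mulr0 ltxx.
Qed.

Lemma big_N n (D : seq 'rV[R]_n) q (B : R) :
  (forall d, d \in D -> 0 < dot d q) ->
  exists N : nat, forall M : nat, (N <= M)%N -> forall d, d \in D ->
     B + \sum_i `|d 0 i| < M%:R * dot d q.
Proof.
elim: D => [|d D IH] HD; first by exists 0%N.
have [N1 HN1] : exists N : nat, forall M : nat, (N <= M)%N -> forall d, d \in D ->
     B + \sum_i `|d 0 i| < M%:R * dot d q.
  by apply: IH => d' hd'; apply: HD; rewrite inE hd' orbT.
have dq : 0 < dot d q by apply: HD; rewrite inE eqxx.
set S := B + \sum_i `|d 0 i|.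
pose N2 := (Num.trunc (S / dot d q)).+1.
have HN2 : S < N2%:R * dot d q.
  by rewrite -ltr_pdivrMr // truncnS_gt.
exists (maxn N1 N2) => M; rewrite geq_max => /andP[h1 h2] d'.
rewrite inE => /orP[/eqP ->|hd']; last exact: HN1.
apply: lt_le_trans HN2 _; apply: ler_wpM2r; first exact: ltW.
by rewrite ler_nat.
Qed.

Lemma intpt n (D : seq 'rV[R]_n) q (B : R) :
  (forall d, d \in D -> 0 < dot d q) ->
  exists s : expo n, forall d, d \in D -> B < dot d (toR s).
Proof.
move=> HD; have [N HN] := big_N B HD.
exists (\row_i Num.floor (N%:R * q 0 i)) => d hd.
have := HN N (leqnn N) d hd.
suff : N%:R * dot d q - \sum_i `|d 0 i| <= dot d (toR (\row_i Num.floor (N%:R * q 0 i))).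
  by move=> h1 h2; lra.
rewrite -dotZr /dot -sumrB; apply: ler_sum => i _; rewrite !mxE.
set x := N%:R * q 0 i.
have [h1 h2] : (Num.floor x)%:~R <= x /\ x < (Num.floor x + 1)%:~R.
  by split; [exact: floor_le | exact: floorD1_gt].
rewrite intrD in h2.
have : `|d 0 i * ((Num.floor x)%:~R - x)| <= `|d 0 i|.
  rewrite normrM; apply: ler_piMr => //; rewrite ler_norml; apply/andP; split; lra.
rewrite mulrBr => h3; have := ler_norm (- (d 0 i * (Num.floor x)%:~R - d 0 i * x)).
rewrite normrN; lra.
Qed.

Lemma le_sum_seq (T : eqType) (r : seq T) (F : T -> R) x :
  (forall y, 0 <= F y) -> x \in r -> F x <= \sum_(y <- r) F y.
Proof.
move=> F0; elim: r => [|y r IH] //; rewrite inE big_cons => /orP[/eqP ->|hx].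
  by rewrite lerDl sumr_ge0.
by apply: le_trans (IH hx) _; rewrite lerDr.
Qed.

Lemma avoid n (D : seq 'rV[R]_n) (H : seq ('rV[R]_n * R)) p :
  (forall ab, ab \in H -> ab.1 != 0) -> (forall d, d \in D -> 0 < dot d p) ->
  exists s : expo n, (forall d, d \in D -> 0 < dot d (toR s)) /\
     (forall ab, ab \in H -> dot ab.1 (toR s) != ab.2).
Proof.
move=> HH HD.
have HA : forall a, a \in map fst H -> a != 0 by move=> a /mapP[ab hab ->]; exact: HH.
have [q [Hq1 Hq2]] := perturb HA HD.
pose sg (a : 'rV[R]_n) : R := if 0 < dot a q then 1 else -1.
pose D' := D ++ map (fun ab => sg ab.1 *: ab.1) H.
have sgpos ab : ab \in H -> 0 < dot (sg ab.1 *: ab.1) q.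
  move=> hab; have := Hq2 ab.1 (map_f _ hab).
  rewrite dotZl /sg; case: ifP => [h _|/negbT]; first by rewrite mul1r.
  by rewrite -leNgt le_eqVlt => h /negPf e; rewrite e /= in h; rewrite mulN1r oppr_gt0.
have HD' : forall d, d \in D' -> 0 < dot d q.
  move=> d; rewrite mem_cat => /orP[hd|/mapP[ab hab ->]]; [exact: Hq1|exact: sgpos].
set B := \sum_(ab <- H) `|ab.2|.
have B0 : 0 <= B by apply: sumr_ge0 => ab _; exact: normr_ge0.
have Bb ab : ab \in H -> `|ab.2| <= B.
  by move=> hab; rewrite /B; apply: (le_sum_seq (fun y => normr_ge0 _) hab).
have [s Hs] := intpt B HD'.
exists s; split => [d hd|ab hab].
  by apply: le_lt_trans B0 (Hs d _); rewrite mem_cat hd.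
have hD : sg ab.1 *: ab.1 \in D' by rewrite /D' mem_cat; apply/orP; right; apply/mapP; exists ab.
have := Hs _ hD; rewrite dotZl => h; apply/negP => /eqP e; move: h; rewrite e.
have := Bb ab hab; have := ler_norm ab.2; have := ler_norm (- ab.2); rewrite normrN.
by rewrite /sg; case: ifP => _; rewrite ?mul1r ?mulN1r; lra.
Qed.

Lemma cont_sum (T : topologicalType) (V : normedModType R) (I : Type) (r : seq I)
   (F : I -> T -> V) :
  (forall i, continuous (F i)) -> continuous (fun x => \sum_(i <- r) F i x).
Proof.
move=> HF; elim: r => [|i r IH].
  by under eq_fun do rewrite big_nil; exact: cst_continuous.
under eq_fun do rewrite big_cons.
by move=> x; apply: continuousD; [exact: HF | exact: IH].
Qed.

Section Sep.
Local Open Scope classical_set_scope.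
Variables (n m : nat) (v : 'I_m -> 'rV[R]_n).
Definition comb (l : 'rV[R]_m) : 'rV[R]_n := \sum_i l 0 i *: v i.
Definition Fn (l : 'rV[R]_m) : R := dot (comb l) (comb l).

Lemma comb_cont : continuous comb.
Proof.
apply: cont_sum => i x; apply: continuousZr_tmp; exact: coord_continuous.
Qed.

Lemma Fn_cont : continuous Fn.
Proof.
rewrite /Fn /dot; apply: (@cont_sum _ R^o) => k x.
have h : {for x, continuous ((fun M : 'rV[R]_n => M 0 k) \o comb)}.
  apply: continuous_comp; [exact: comb_cont | exact: coord_continuous].
exact: (continuousM h h).
Qed.

Definition simplex := [set l : 'rV[R]_m | (forall i, 0 <= l 0 i) /\ \sum_i l 0 i = 1].

Lemma simplex_closed : closed simplex.
Proof.
have -> : simplex = (\bigcap_(i in setT) ((fun l : 'rV[R]_m => l 0 i) @^-1` [set x | 0 <= x]))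
   `&` ((fun l : 'rV[R]_m => \sum_i l 0 i) @^-1` [set x | x = 1]).
  apply/seteqP; split => l /= [H1 H2]; split => //.
    by move=> i _; exact: H1.
  by move=> i; exact: (H1 i I).
apply: closedI.
  apply: closed_bigI => i _; apply: preimage_closed; last exact: closed_ge.
  by move=> l _; exact: coord_continuous.
apply: preimage_closed; last exact: closed_eq.
move=> l _; apply: (@cont_sum _ R^o) => i y; exact: coord_continuous.
Qed.

Lemma simplex_compact : compact simplex.
Proof.
have C := @rV_compact R m (fun=> `[(0:R), 1]%classic) (fun _ => @segment_compact _ (0:R) 1).
apply: (subclosed_compact simplex_closed C).
move=> l [H1 H2] i /=; rewrite in_itv /= H1 /=.
rewrite -H2 (bigD1 i) //= lerDl; apply: sumr_ge0 => j _; exact: H1.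
Qed.

End Sep.

Lemma comb_lin n m (v : 'I_m -> 'rV[R]_n) a b (l1 l2 : 'rV[R]_m) :
  comb v (a *: l1 + b *: l2) = a *: comb v l1 + b *: comb v l2.
Proof.
rewrite /comb !scaler_sumr -big_split /=; apply: eq_bigr => i _.
by rewrite !mxE scalerDl !scalerA.
Qed.

Lemma comb_delta n m (v : 'I_m -> 'rV[R]_n) j :
  comb v (\row_i ((i == j)%:R : R)) = v j.
Proof.
rewrite /comb (bigD1 j) //= mxE eqxx scale1r big1 ?addr0 // => i /negPf ij.
by rewrite mxE ij scale0r.
Qed.

Lemma sep n (T : eqType) (U : seq T) (P : T -> 'rV[R]_n) (x : 'rV[R]_n) :
  uniq U ->
  ~ (exists lam : T -> R, [/\ forall u, u \in U -> 0 <= lam u,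
        \sum_(u <- U) lam u = 1 & x = \sum_(u <- U) lam u *: P u]) ->
  exists p, forall u, u \in U -> dot (P u) p < dot x p.
Proof.
case: U => [|u0 U'] uU Hn; first by exists 0.
set U := u0 :: U' in uU Hn *.
pose m := (size U').+1.
pose v (i : 'I_m) := P (nth u0 U i) - x.
have ne : (@simplex m !=set0)%classic.
  exists (\row_i ((i == ord0)%:R : R)); split.
    by move=> i; rewrite mxE; case: (_ == _).
  by rewrite (bigD1 ord0) //= mxE eqxx big1 ?addr0 // => i /negPf ij; rewrite mxE ij.
have cF : ({within @simplex m, continuous (Fn v)})%classic.
  by apply: continuous_subspaceT; exact: Fn_cont.
have [c cA cmin] := EVT_min_rV ne (@simplex_compact m) cF.
move: cA; rewrite inE => -[c0 c1].
set y := comb v c.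
have var j : dot y y <= dot y (v j).
  rewrite leNgt; apply/negP => hlt.
  set w := v j - y.
  set a := dot y y - dot y (v j).
  have a0 : 0 < a by rewrite subr_gt0.
  set q := dot w w.
  have q0 : 0 <= q by apply: dot_ge0.
  set t := a / (q + a).
  have qa0 : 0 < q + a by apply: ltr_wpDl.
  have t0 : 0 < t by apply: divr_gt0.
  have t1 : t <= 1 by rewrite ler_pdivrMr // mul1r lerDr.
  have tqa : t * (q + a) = a by rewrite /t mulfVK // gt_eqF.
  pose l := (1 - t) *: c + t *: \row_i ((i == j)%:R : R).
  have lA : l \in @simplex m.
    rewrite inE; split.
      move=> i; rewrite !mxE; apply: addr_ge0; apply: mulr_ge0.
      - by rewrite subr_ge0.
      - exact: c0.
      - exact: ltW.
      - by case: (i == j).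
    under eq_bigr => i _ do rewrite !mxE.
    rewrite big_split /= -!mulr_sumr c1 (bigD1 j) //= eqxx big1 ?addr0.
      by rewrite !mulr1 subrK.
    by move=> i /negPf ->.
  have := cmin l lA; rewrite /Fn /l comb_lin comb_delta -/y.
  have E (a1 b1 : 'rV[R]_n) : (1 - t) *: a1 + t *: b1 = a1 + t *: (b1 - a1).
    by rewrite scalerBr scalerBl scale1r -!addrA; congr (_ + _); rewrite addrC.
  rewrite E -/w.
  rewrite !dotDl !dotDr !dotZl !dotZr (dotC w y) -/q.
  have -> : dot y w = - a by rewrite /w dotBr /a opprB.
  move=> H.
  have H2 : 0 <= t * (t * q - 2 * a).
    rewrite mulrBr; move: H; rewrite !mulrN; nra.
  have : t * q - 2 * a < 0.
    have : t * q = a - t * a by move: tqa; rewrite mulrDr; lra.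
    have : 0 < t * a by apply: mulr_gt0.
    lra.
  by move=> h; move: H2; rewrite pmulr_rge0 // leNgt h.
have y0 : y != 0.
  apply/negP => /eqP y0; apply: Hn.
  pose lam u := oapp (fun i : 'I_(size U) => c 0 i) 0 (insub (index u U)).
  have lamE u : u \in U -> exists i : 'I_(size U), lam u = c 0 i /\ nth u0 U i = u.
    move=> hu; rewrite /lam; case: insubP => [i _ ei|]; last by rewrite index_mem hu.
    by exists i; split => //; rewrite ei nth_index.
  exists lam; split.
  - by move=> u /lamE [i [-> _]]; exact: c0.
  - by rewrite -c1 (big_index_uniq _ _ (fun i : 'I_(size U) => c 0 i)).
  - have : comb v c = \sum_i c 0 i *: P (nth u0 U i) - x.
      rewrite /comb (eq_bigr (fun i => c 0 i *: P (nth u0 U i) - c 0 i *: x)); last first.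
        by move=> i _; rewrite /v scalerBr.
      by rewrite sumrB -scaler_suml c1 scale1r.
    rewrite -/y y0 => /esym /eqP; rewrite subr_eq0 => /eqP <-.
    rewrite (big_index_uniq _ _ (fun i : 'I_(size U) => c 0 i *: P (nth u0 U i))) //.
    apply: eq_big_seq => u hu; have [i [li ni]] := lamE u hu.
    rewrite li -ni /lam.
    by rewrite (index_uniq u0 (ltn_ord i) uU) valK.
have yy : 0 < dot y y by apply: dot_gt0.
exists (- y) => u hu.
have hi : (index u U < m)%N by rewrite index_mem.
have := var (Ordinal hi); rewrite /v /= nth_index // dotBr.
by rewrite !dotNr (dotC (P u)) (dotC x); lra.
Qed.

Definition Hpairs n (S : seq (expo n)) : seq ('rV[R]_n * R) :=
  [seq (toR (pw.1 - pw.2), 0) | pw <- [seq pw <- [seq (u, w) | u <- S, w <- S] | pw.1 != pw.2]].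

Lemma Hpairs_mem n (S : seq (expo n)) u w :
  u \in S -> w \in S -> u != w -> (toR (u - w), 0) \in Hpairs S.
Proof.
move=> hu hw uw; apply/mapP; exists (u, w) => //.
by rewrite mem_filter /= uw; apply/allpairsP; exists (u, w).
Qed.

Lemma Hpairs_nz n (S : seq (expo n)) ab : ab \in Hpairs S -> ab.1 != 0.
Proof.
move=> /mapP[[u w]]; rewrite mem_filter /= => /andP[uw _] -> /=.
rewrite toRB subr_eq0; apply: contra uw => /eqP /toR_inj ->; by [].
Qed.

Lemma dot_toRB n (u w s : expo n) :
  dot (toR u - toR w) (toR s) = (zdot u s)%:~R - (zdot w s)%:~R.
Proof. by rewrite dotBl !dot_toR. Qed.

Lemma notK n (K : expo n -> Prop) (H : seq ('rV[R]_n * R)) s :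
  (forall k, K k -> exists2 ab, ab \in H & hyperplane ab.1 ab.2 (toR k)) ->
  (forall ab, ab \in H -> dot ab.1 (toR s) != ab.2) -> ~ K s.
Proof.
move=> HK Hs Ks; have [ab hab [_ e]] := HK s Ks.
by move: (Hs ab hab); rewrite /dot e eqxx.
Qed.

Lemma inj_of n (S : seq (expo n)) (H : seq ('rV[R]_n * R)) s :
  (forall ab, ab \in H -> dot ab.1 (toR s) != ab.2) -> {subset Hpairs S <= H} ->
  forall u w, u \in S -> w \in S -> u != w -> zdot u s != zdot w s.
Proof.
move=> Hs sub u w hu hw uw; have := Hs _ (sub _ (Hpairs_mem hu hw uw)).
rewrite /= toRB dot_toRB; apply: contra => /eqP ->; by rewrite subrr.
Qed.

Theorem proposition3p3 (r : nat) (f g : laurent r) :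
  (exists K : expo r -> Prop, in_fin_hyperplanes K /\
     (newton_sub f g -> forall s, ~ K s -> newton_sub (tsubst s f) (tsubst s g)))
  /\
  (forall K : expo r -> Prop, in_fin_hyperplanes K ->
     (forall s, ~ K s -> newton_sub (tsubst s f) (tsubst s g)) ->
     newton_sub f g)
  /\
  (forall K : expo r -> Prop, in_fin_hyperplanes K ->
     newton_ssub f g ->
     exists s, ~ K s /\ newton_ssub (tsubst s f) (tsubst s g)).
Proof.
split; [|split].
- exists (fun s => exists2 ab, ab \in Hpairs (finsupp g) & hyperplane ab.1 ab.2 (toR s)).
  split.
    by exists (Hpairs (finsupp g)); split => [ab|k //]; exact: Hpairs_nz.
  move=> fg s Ks; apply: part1 fg => u w hu hw uw.
  apply/negP => /eqP e; apply: Ks; exists (toR (u - w), 0); first exact: Hpairs_mem.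
  split; first by apply: (Hpairs_nz (Hpairs_mem hu hw uw)).
  by rewrite /= -/(dot _ _) toRB dot_toRB e subrr.
- move=> K [H [Hnz HK]] hyp; apply: newton_conv => u hu.
  case: (classic (newton g (toR u))) => // ngu; exfalso.
  have [p Hp] := @sep r _ (finsupp g) (@toR r) (toR u) (fset_uniq _) ngu.
  pose D := [seq toR u - toR w | w <- finsupp g].
  have HD : forall d, d \in D -> 0 < dot d p.
    by move=> d /mapP[w hw ->]; rewrite dotBl subr_gt0; exact: Hp.
  have HH' : forall ab, ab \in H ++ Hpairs (finsupp f) -> ab.1 != 0.
    by move=> ab; rewrite mem_cat => /orP[/Hnz|/Hpairs_nz].
  have [s [Hs1 Hs2]] := avoid HH' HD.
  have nK : ~ K s.
    by apply: (notK HK) => ab hab; apply: Hs2; rewrite mem_cat hab.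
  have injf : forall u w, u \in finsupp f -> w \in finsupp f -> u != w -> zdot u s != zdot w s.
    by apply: (inj_of Hs2) => ab hab; rewrite mem_cat hab orbT.
  have kf : (\row_(i < 1) zdot u s) \in finsupp (tsubst s f).
    by apply: ts_supp_in => // w hw wu; apply: injf.
  have := hyp s nK _ (newton_pt kf) => /newton1_ub [k2 hk2].
  have [w hw ew] := ts_supp hk2.
  rewrite toR1 mxE -ew ler_int => le1.
  have := Hs1 (toR u - toR w) (map_f _ hw); rewrite dot_toRB subr_gt0 ltr_int.
  by rewrite ltNge le1.
- move=> K [H [Hnz HK]] [fg [x [gx nfx]]].
  have [w0 hw0 nw0] : exists2 w0, w0 \in finsupp g & ~ newton f (toR w0).
    case: (classic (exists2 w0, w0 \in finsupp g & ~ newton f (toR w0))) => // N.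
    exfalso; apply: nfx; apply: (newton_conv (f := g)) => // w hw.
    by case: (classic (newton f (toR w))) => // nw; exfalso; apply: N; exists w.
  have [p Hp] := @sep r _ (finsupp f) (@toR r) (toR w0) (fset_uniq _) nw0.
  pose D := [seq toR w0 - toR u | u <- finsupp f].
  have HD : forall d, d \in D -> 0 < dot d p.
    by move=> d /mapP[u hu ->]; rewrite dotBl subr_gt0; exact: Hp.
  have HH' : forall ab, ab \in H ++ Hpairs (finsupp g) -> ab.1 != 0.
    by move=> ab; rewrite mem_cat => /orP[/Hnz|/Hpairs_nz].
  have [s [Hs1 Hs2]] := avoid HH' HD.
  have nK : ~ K s.
    by apply: (notK HK) => ab hab; apply: Hs2; rewrite mem_cat hab.
  have injg : forall u w, u \in finsupp g -> w \in finsupp g -> u != w -> zdot u s != zdot w s.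
    by apply: (inj_of Hs2) => ab hab; rewrite mem_cat hab orbT.
  exists s; split => //; split; first exact: part1.
  have kg : (\row_(i < 1) zdot w0 s) \in finsupp (tsubst s g).
    by apply: ts_supp_in => // w hw wu; apply: injg.
  exists (toR (\row_(i < 1) zdot w0 s)); split; first exact: newton_pt.
  move=> /newton1_ub [k hk]; have [u hu eu] := ts_supp hk.
  rewrite toR1 mxE -eu ler_int => le1.
  have := Hs1 (toR w0 - toR u) (map_f _ hu); rewrite dot_toRB subr_gt0 ltr_int.
  by rewrite ltNge le1.
Qed.
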